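(* Let $G$ be a chordal graph and $X\subseteq V(G)$ a clique, and let $L_1,\dots,L_t$ be the evaporation sequence of $G$ with exception set $X$. If $G\setminus X$ is connected, then $L_t$ is a clique (where $L_t=\emptyset$ if $t=0$).
   Context: A vertex is simplicial if its neighborhood is a clique. For a chordal graph $G$ and a clique $X\subseteq V(G)$ (possibly empty), the evaporation sequence of $G$ with exception set $X$ is defined recursively: if $X=V(G)$ it is the empty sequence; otherwise let $L_1$ be the set of simplicial vertices of $G$ that are not in $X$ (this set is always nonempty), and the evaporation sequence is $L_1$ followed by the evaporation sequence of $G-L_1$ with exception set $X$. If the sequence is $L_1,\dots,L_t$ we say $G$ evaporates at time $t$ with exception set $X$. *)

(* Defs.v *)
(* A finite simple graph is a symmetric irreflexive relation
   [e : rel T] on a finType T (vertex set = all of T); induced subgraphs are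
   given by a vertex set [V : {set T}]. *)
From mathcomp Require Import all_boot.
Set Implicit Arguments. Unset Strict Implicit. Unset Printing Implicit Defensive.

Section Graphs.
Variable T : finType.
Variable e : rel T.

Definition is_clique (K : {set T}) : Prop :=
  {in K &, forall u v, u != v -> e u v}.

Definition nbhd (V : {set T}) (v : T) : {set T} := [set u in V | e v u].

Definition simplicialb (V : {set T}) (v : T) : bool :=
  (v \in V) && [forall u in nbhd V v, forall w in nbhd V v, (u != w) ==> e u w].

Definition simplicials (V : {set T}) : {set T} := [set v | simplicialb V v].

Definition chordal (V : {set T}) : Prop :=
  forall s : seq T, uniq s -> 4 <= size s -> all (mem V) s -> cycle e s ->
    exists u v : T,
      [/\ u \in s, v \in s, u != v, (next s u != v) && (next s v != u)
        & e u v].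

(* Evaporation sequence of G[V] with exception set X (computed with fuel;
   for a chordal graph and a clique X, each step removes at least one vertex,
   so fuel #|V| suffices and the cut-off never triggers). *)
Fixpoint evap_aux (X : {set T}) (n : nat) (V : {set T}) : seq {set T} :=
  match n with
  | 0 => [::]
  | n'.+1 =>
      if V \subset X then [::]
      else let L := simplicials V :\: X in L :: evap_aux X n' (V :\: L)
  end.

Definition evaporation_sequence (V X : {set T}) : seq {set T} :=
  evap_aux X #|V| V.

Definition connected_in (W : {set T}) : Prop :=
  {in W &, forall u v,
     connect [rel x y | [&& e x y, x \in W & y \in W]] u v}.

End Graphs.

(* Main.v *)
Require Import Defs.
From mathcomp Require Import all_boot.
From mathcomp Require Import zify.
Set Implicit Arguments. Unset Strict Implicit. Unset Printing Implicit Defensive.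

Section Aux.
Variable T : finType.
Variable e : rel T.
Hypothesis esym : symmetric e.

Lemma simpl_edge (V : {set T}) x u w : x \in simplicials e V -> u \in V -> w \in V ->
  e x u -> e x w -> u != w -> e u w.
Proof.
rewrite inE /simplicialb => /andP [_ /forallP H] uV wV xu xw uw.
move: (H u); rewrite !inE uV xu /= => /forallP /(_ w).
by rewrite !inE wV xw uw.
Qed.

Lemma conn_clique (V W : {set T}) : W \subset V -> W \subset simplicials e V ->
  connected_in e W -> is_clique e W.
Proof.
move=> WV WS Hc.
set R := [rel x y | [&& e x y, x \in W & y \in W]].
have key : forall n p u, size p < n -> u \in W -> path R u p ->
    u = last u p \/ e u (last u p).
  elim=> // n IH [|x1 [|x2 p]] u //= Hs uW; first by left.
    by case/andP=> /and3P [ux1 _ _] _; right.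
  case/and3P=> /and3P [ux1 _ x1W] /and3P [x12 _ x2W] Hp.
  have [ux2|ux2] := eqVneq u x2.
    subst u; apply: IH => //; lia.
  have eu2 : e u x2.
    apply: (@simpl_edge V x1);
    by rewrite ?(subsetP WS) ?(subsetP WV) // esym.
  apply: (IH (x2 :: p)); rewrite /= ?eu2 ?uW ?x2W //; lia.
move=> u v uW vW uv.
have /connectP [p Hp E] := Hc u v uW vW.
have [H|] := key (size p).+1 p u (ltnSn _) uW Hp; last by rewrite E.
by rewrite E -H eqxx in uv.
Qed.

Lemma conn_remove (V W L : {set T}) : W \subset V -> L \subset simplicials e V ->
  connected_in e W -> connected_in e (W :\: L).
Proof.
move=> WV LS Hc.
set R := [rel x y | [&& e x y, x \in W & y \in W]].
set R' := [rel x y | [&& e x y, x \in W :\: L & y \in W :\: L]].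
have key : forall n p u, size p < n -> u \in W -> u \notin L -> path R u p ->
    last u p \notin L -> connect R' u (last u p).
  elim=> // n IH [|x1 p] u //= Hs uW uL.
  case/andP=> /and3P [ux1 _ x1W] Hp Hl.
  case x1L: (x1 \in L).
    case: p Hs Hp Hl => [|x2 p] /= Hs; first by rewrite x1L.
    case/andP=> /and3P [x12 _ x2W] Hp Hl.
    have [ux2|ux2] := eqVneq u x2.
      subst u; apply: IH => //; lia.
    have eu2 : e u x2.
      apply: (@simpl_edge V x1);
      by rewrite ?(subsetP LS) ?(subsetP WV) // esym.
    apply: (IH (x2 :: p)); rewrite /= ?eu2 ?uW ?x2W //; lia.
  apply: (@connect_trans _ _ x1).
    by apply: connect1; rewrite /= !inE ux1 uL uW x1L x1W.
  by apply: IH; rewrite ?x1L //; lia.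
move=> u v; rewrite !inE => /andP [uL uW] /andP [vL vW].
have /connectP [p Hp E] := Hc u v uW vW.
rewrite E; apply: (key (size p).+1) => //; by rewrite -E.
Qed.

Variable X : {set T}.

Lemma evap_empty (V : {set T}) : simplicials e V :\: X = set0 ->
  forall n, all (fun A => A == set0) (evap_aux e X n V).
Proof.
move=> H; elim=> [|n IH] //=.
case: ifP => // _; by rewrite H setD0 /= eqxx.
Qed.

Lemma main n (V : {set T}) : #|V :\: X| <= n -> connected_in e (V :\: X) ->
  is_clique e (last set0 (evap_aux e X n V)).
Proof.
have c0 : is_clique e set0 by move=> u v; rewrite inE.
elim: n V => [|n IH] V Hn Hc //=.
case: ifP => VX //.
set L := simplicials e V :\: X.
have [HL|HL] := eqVneq L set0.
  have := evap_empty HL n.+1; rewrite /= VX -/L => Hall.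
  have := mem_last set0 (L :: evap_aux e X n (V :\: L)).
  rewrite inE => /orP [/eqP H0|/(allP Hall)/eqP H0]; move: H0 => /= ->; exact: c0.
have LVX : L \subset V :\: X.
  by apply: setSD; apply/subsetP => x; rewrite inE /simplicialb => /andP [].
have EQ : (V :\: L) :\: X = (V :\: X) :\: L.
  by apply/setP => x; rewrite !inE; case: (x \in X); case: (x \in L).
have H' : #|(V :\: L) :\: X| <= n.
  rewrite EQ cardsD (setIidPr LVX).
  have : 0 < #|L| by rewrite card_gt0.
  have : #|L| <= #|V :\: X| by apply: subset_leq_card.
  lia.
have Hc' : connected_in e ((V :\: L) :\: X).
  rewrite EQ; apply: (@conn_remove V) => //; first exact: subsetDl.
  exact: subsetDl.
case E: (evap_aux e X n (V :\: L)) => [|a s] /=; last first.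
  by have := IH _ H' Hc'; rewrite E.
have E0 : (V :\: L) :\: X = set0.
  case: n Hn IH H' Hc' E => [|m] _ _ H' _ E.
    by apply/eqP; rewrite -cards_eq0; lia.
  by move: E => /=; case: ifP => // VLX _; apply/eqP; rewrite setD_eq0.
have LS : L \subset simplicials e V by exact: subsetDl.
clearbody L.
have LE : L = V :\: X.
  apply/eqP; rewrite eqEsubset LVX /=; apply/subsetP => x xV.
  apply/negPn/negP => xL.
  have : x \in (V :\: L) :\: X by move: xV; rewrite !inE xL /=.
  by rewrite E0 inE.
apply: (@conn_clique V); first by rewrite LE subsetDl.
  exact: LS.
by rewrite LE.
Qed.

End Aux.

Theorem mainTheorem5 (T : finType) (e : rel T) (X : {set T}) :
  symmetric e -> irreflexive e ->
  chordal e [set: T] ->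
  is_clique e X ->
  connected_in e (~: X) ->
  is_clique e (last set0 (evaporation_sequence e [set: T] X)).
Proof.
move=> esym _ _ _ Hc.
apply: main => //; first by apply: subset_leq_card; exact: subsetDl.
by rewrite setTD.
Qed.
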